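(* Let $(\mathfrak{g},[\cdot,\ldots,\cdot],\varepsilon,\alpha)$ be an $n$-Hom-Lie color algebra with $n\geq3$, let $p$ be a positive integer with $p<n$, and let $a_1,\ldots,a_p\in\mathfrak{g}_0$ satisfy $\alpha(a_i)=a_i$ for all $i\in\{1,\ldots,p\}$. Then $(\mathfrak{g},\{\cdot,\ldots,\cdot\},\varepsilon,\alpha)$ is an $(n-p)$-Hom-Lie color algebra, where $\{x_1,\ldots,x_{n-p}\}=[a_1,\ldots,a_p,x_1,\ldots,x_{n-p}]$ for all $x_1,\ldots,x_{n-p}\in\mathfrak{g}$.
   Context: $\mathbb{K}$ is a field of characteristic zero and $\Gamma$ an abelian group with neutral element $0$; $\mathfrak{g}_0$ is the degree-$0$ component. A bicharacter is a map $\varepsilon:\Gamma\times\Gamma\to\mathbb{K}\setminus\{0\}$ with $\varepsilon(a,b)\varepsilon(b,a)=1$, $\varepsilon(a,b+c)=\varepsilon(a,b)\varepsilon(a,c)$, $\varepsilon(a+b,c)=\varepsilon(a,c)\varepsilon(b,c)$. For homogeneous $x,y$, $\varepsilon(x,y)=\varepsilon(|x|,|y|)$ and $\varepsilon(x,y_1+\dots+y_k)=\varepsilon(|x|,|y_1|+\dots+|y_k|)$ ($=1$ for an empty sum). An $m$-Hom-Lie color algebra $(\mathfrak{g},[\cdot,\ldots,\cdot],\varepsilon,\alpha)$ is a $\Gamma$-graded vector space with an $m$-linear bracket of degree zero, a bicharacter $\varepsilon$ and a degree-zero linear map $\alpha$ such that for homogeneous elements: (i) $[x_1,\ldots,x_i,x_{i+1},\ldots,x_m]=-\varepsilon(x_i,x_{i+1})[x_1,\ldots,x_{i+1},x_i,\ldots,x_m]$;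 (ii) $[\alpha(x_1),\ldots,\alpha(x_{m-1}),[y_1,\ldots,y_m]]=\sum_{i=1}^m\varepsilon(x_1+\dots+x_{m-1},y_1+\dots+y_{i-1})[\alpha(y_1),\ldots,\alpha(y_{i-1}),[x_1,\ldots,x_{m-1},y_i],\alpha(y_{i+1}),\ldots,\alpha(y_m)]$. *)

(* Defs.v *)
From HB Require Import structures.
From mathcomp Require Import all_boot all_order all_algebra.
Set Implicit Arguments. Unset Strict Implicit. Unset Printing Implicit Defensive.
Import GRing.Theory.
Local Open Scope ring_scope.

(* Conventions:
   - Gamma is an abelian group, modelled as a zmodType G.
   - The Gamma-graded vector space g is a K-module V together with the family
     gr : G -> {pred V} of homogeneous components g_a, which are subspaces and
     whose sum is direct and equal to V.
   - An m-ary bracket is a function br : seq V -> V; only its values on lists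
     of size m matter.
   - Statements about homogeneous elements take, along with a list xs of
     elements, a list ds of degrees with xs_i in g_(ds_i). *)

Section Defs.
Variables (K : fieldType) (G : zmodType) (V : lmodType K).

Definition subspace (P : {pred V}) : Prop :=
  0 \in P /\ forall (k : K) (u v : V), u \in P -> v \in P -> k *: u + v \in P.

Definition graded_space (gr : G -> {pred V}) : Prop :=
  [/\ forall a, subspace (gr a),
      (forall v : V, exists (s : seq G) (f : G -> V),
          [/\ uniq s, forall a, f a \in gr a & v = \sum_(a <- s) f a])
    & (forall (s : seq G) (f : G -> V), uniq s -> (forall a, f a \in gr a) ->
          \sum_(a <- s) f a = 0 -> forall a, a \in s -> f a = 0)].

Definition bicharacter (eps : G -> G -> K) : Prop :=
  [/\ forall a b, eps a b != 0,
      forall a b, eps a b * eps b a = 1,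
      forall a b c, eps a (b + c) = eps a b * eps a c
    & forall a b c, eps (a + b) c = eps a c * eps b c].

Definition homs (gr : G -> {pred V}) (ds : seq G) (xs : seq V) : Prop :=
  size ds = size xs /\ forall i, (i < size xs)%N -> nth 0 xs i \in gr (nth 0 ds i).

Definition degsum (ds : seq G) : G := \sum_(d <- ds) d.

Definition swap_adj (s : seq V) (i : nat) : seq V :=
  set_nth 0 (set_nth 0 s i (nth 0 s i.+1)) i.+1 (nth 0 s i).

Definition HomLieColor (m : nat) (gr : G -> {pred V}) (br : seq V -> V)
    (eps : G -> G -> K) (alpha : V -> V) : Prop :=
  graded_space gr /\ bicharacter eps /\
      (forall (k : K) (u v : V), alpha (k *: u + v) = k *: alpha u + alpha v) /\
      (forall a v, v \in gr a -> alpha v \in gr a) /\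
      (forall (s : seq V) (i : nat) (k : K) (u v : V), size s = m -> (i < m)%N ->
          br (set_nth 0 s i (k *: u + v))
          = k *: br (set_nth 0 s i u) + br (set_nth 0 s i v)) /\
      (forall ds xs, homs gr ds xs -> size xs = m -> br xs \in gr (degsum ds)) /\
      (forall ds xs (i : nat), homs gr ds xs -> size xs = m -> (i.+1 < m)%N ->
          br xs = - (eps (nth 0 ds i) (nth 0 ds i.+1) *: br (swap_adj xs i))) /\
      (forall dx xs dy ys, homs gr dx xs -> homs gr dy ys ->
          size xs = m.-1 -> size ys = m ->
          br (map alpha xs ++ [:: br ys])
          = \sum_(i < m) eps (degsum dx) (degsum (take i dy)) *:
              br (map alpha (take i ys) ++ br (rcons xs (nth 0 ys i))
                    :: map alpha (drop i.+1 ys))).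

End Defs.

(* Main.v *)
Require Import Defs.
From HB Require Import structures.
From mathcomp Require Import all_boot all_order all_algebra.
From mathcomp Require Import zify.
Import GRing.Theory.
Local Open Scope ring_scope.

Ltac szlia :=
  repeat match goal with
  | H : is_true _ |- _ => revert H
  | H : @eq nat _ _ |- _ => revert H
  end;
  repeat match goal with |- context [@size ?T ?s] =>
    let k := fresh "k" in set k := @size T s; clearbody k end;
  intros; lia.

Lemma nth_cat_add (T : Type) (x0 : T) (s1 s2 : seq T) k i :
  size s1 = k -> nth x0 (s1 ++ s2) (k + i) = nth x0 s2 i.
Proof. by move<-; rewrite nth_cat ltnNge leq_addr /= addKn. Qed.

Lemma take_cat_add (T : Type) (s1 s2 : seq T) k i :
  size s1 = k -> take (k + i) (s1 ++ s2) = s1 ++ take i s2.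
Proof. by move<-; rewrite take_cat ltnNge leq_addr /= addKn. Qed.

Lemma drop_cat_add (T : Type) (s1 s2 : seq T) k i :
  size s1 = k -> drop (k + i) (s1 ++ s2) = drop i s2.
Proof. by move<-; rewrite drop_cat ltnNge leq_addr /= addKn. Qed.

Lemma set_nth_cat_add (T : Type) (x0 : T) (s1 s2 : seq T) i y :
  set_nth x0 (s1 ++ s2) (size s1 + i) y = s1 ++ set_nth x0 s2 i y.
Proof. by elim: s1 => //= x s1 IH; rewrite IH. Qed.

Definition swapg (T : Type) (x0 : T) (s : seq T) (i : nat) : seq T :=
  set_nth x0 (set_nth x0 s i (nth x0 s i.+1)) i.+1 (nth x0 s i).
Arguments swapg {T}.

Lemma swap_adjE (K : fieldType) (V : lmodType K) (s : seq V) i :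
  swap_adj s i = swapg (0 : V) s i.
Proof. by []. Qed.

Lemma nth_swapg (T : Type) (x0 : T) (s : seq T) i j :
  nth x0 (swapg x0 s i) j =
  if j == i then nth x0 s i.+1 else if j == i.+1 then nth x0 s i else nth x0 s j.
Proof.
rewrite /swapg nth_set_nth /= nth_set_nth /=.
case: (eqVneq j i.+1) => [->|h1]; case: (eqVneq j i) => [h2|h2] //;
  try by rewrite eqn_leq ltnn.
Qed.

Lemma size_swapg (T : Type) (x0 : T) (s : seq T) i :
  (i.+1 < size s)%N -> size (swapg x0 s i) = size s.
Proof. rewrite /swapg !size_set_nth => h; lia. Qed.

Lemma swapg_cat (T : Type) (x0 : T) (s1 s2 : seq T) i :
  swapg x0 (s1 ++ s2) (size s1 + i) = s1 ++ swapg x0 s2 i.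
Proof.
rewrite /swapg -[(size s1 + i).+1]addnS !nth_cat_add //.
by rewrite set_nth_cat_add set_nth_cat_add.
Qed.

Lemma degsum_nseq (G : zmodType) k (ds : seq G) :
  degsum (nseq k 0 ++ ds) = degsum ds.
Proof. by elim: k => //= k IH; rewrite /degsum big_cons add0r. Qed.

Section Aux.
Variables (K : fieldType) (G : zmodType) (V : lmodType K).
Variable gr : G -> {pred V}.

Lemma homs_cat0 (a : seq V) ds xs :
  (forall i, (i < size a)%N -> nth 0 a i \in gr 0) ->
  homs gr ds xs -> homs gr (nseq (size a) 0 ++ ds) (a ++ xs).
Proof.
move=> ha [hs hx]; split; first by rewrite !size_cat size_nseq hs.
move=> i; rewrite size_cat => hi; rewrite !nth_cat size_nseq.
case: ifP => h; first by rewrite nth_nseq h; apply: ha.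
apply: hx. move/negbT: h; rewrite -leqNgt => h.
szlia.
Qed.

Lemma homs_rcons ds xs d x :
  homs gr ds xs -> x \in gr d -> homs gr (rcons ds d) (rcons xs x).
Proof.
move=> [hs hx] hxd; split; first by rewrite !size_rcons hs.
move=> i; rewrite size_rcons => hi; rewrite !nth_rcons hs.
case: ifP => h; first by apply: hx.
case: ifP => h2 //.
move/negbT: h; move/negbT: h2 => h2 h; exfalso; szlia.
Qed.

Lemma homs_swap ds xs i :
  homs gr ds xs -> (i.+1 < size xs)%N -> homs gr (swapg 0 ds i) (swapg 0 xs i).
Proof.
move=> [hs hx] hi; split; first by rewrite !size_swapg ?hs.
move=> j; rewrite size_swapg // => hj; rewrite !nth_swapg.
case: ifP => _; first by apply: hx.
case: ifP => _; first by apply: hx; szlia.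
by apply: hx.
Qed.
End Aux.

Theorem corollary3p7 (K : fieldType) (G : zmodType) (V : lmodType K)
    (char0 : [pchar K] =i pred0)
    (n : nat) (gr : G -> {pred V}) (br : seq V -> V)
    (eps : G -> G -> K) (alpha : V -> V)
    (H : HomLieColor n gr br eps alpha) (hn : (3 <= n)%N)
    (p : nat) (hp0 : (0 < p)%N) (hpn : (p < n)%N)
    (a : seq V) (ha : size a = p)
    (ha0 : forall i, (i < p)%N -> nth 0 a i \in gr 0)
    (hafix : forall i, (i < p)%N -> alpha (nth 0 a i) = nth 0 a i) :
  HomLieColor (n - p) gr (fun xs => br (a ++ xs)) eps alpha.
Proof.
subst p.
case: H => Hgr [Heps [Hal [Halg [Hlin [Hdeg [Hskew Hnam]]]]]].
have Hepsb := Heps; case: Hepsb => Hnz Hinv Hl Hr.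
have e00 : eps 0 0 = 1.
  have h := Hl 0 0 0; rewrite addr0 in h.
  by apply: (mulfI (Hnz 0 0)); rewrite mulr1 -h.
have two : (2%:R : K) != 0 by have := char0 2%N; rewrite !inE /= => ->.
have Hhalf : forall v : V, v = - v -> v = 0.
  move=> v hv.
  have : (2%:R : K) *: v = 0 by rewrite scaler_nat mulr2n {1}hv addNr.
  by move/eqP; rewrite scaler_eq0 (negbTE two) /= => /eqP.
have Hzero : forall L j, size L = n -> (j < n)%N -> nth 0 L j = 0 -> br L = 0.
  move=> L j hL hj h0.
  have := Hlin L j (-1) 0 0 hL hj; rewrite scaler0 add0r scaleN1r addNr.
  have -> // : set_nth 0 L j 0 = L.
  apply: (@eq_from_nth _ 0); first by rewrite size_set_nth; szlia.
  by move=> k _; rewrite nth_set_nth /=; case: eqP => // ->.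
have Hdup : forall d s ds j, homs gr ds s -> size s = n -> (j + d.+1 < n)%N ->
    nth 0 s j = nth 0 s (j + d.+1) -> nth 0 ds j = 0 ->
    nth 0 ds (j + d.+1) = 0 -> br s = 0.
  elim=> [|d IH] s ds j hs hsz hjd hsj hdj hdk.
  - rewrite addn1 in hjd hsj hdk.
    apply: Hhalf; rewrite {1}(Hskew ds s j hs hsz hjd) hdj hdk e00 scale1r.
    have -> // : swap_adj s j = s.
    apply: (@eq_from_nth _ 0); first by rewrite swap_adjE size_swapg //; szlia.
    move=> k _; rewrite swap_adjE nth_swapg.
    by case: eqP => [->|_] //; case: eqP => [->|_].
  - have hk : ((j + d.+1).+1 < n)%N by szlia.
    rewrite (Hskew ds s (j + d.+1) hs hsz hk).
    have ne1 : (j == j + d.+1) = false by apply/negbTE; szlia.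
    have ne2 : (j == (j + d.+1).+1) = false by apply/negbTE; szlia.
    rewrite (IH (swap_adj s (j + d.+1)) (swapg 0 ds (j + d.+1)) j).
    + by rewrite scaler0 oppr0.
    + by rewrite swap_adjE; apply: homs_swap => //; szlia.
    + by rewrite swap_adjE size_swapg //; szlia.
    + szlia.
    + by rewrite swap_adjE !nth_swapg ne1 ne2 eqxx hsj addnS.
    + by rewrite !nth_swapg ne1 ne2.
    + by rewrite nth_swapg eqxx -addnS.
have mapa : map alpha a = a.
  apply: (@eq_from_nth _ 0); first by rewrite size_map.
  by move=> i; rewrite size_map => hi; rewrite (nth_map 0) // hafix.
split; first exact Hgr.
split; first exact Heps.
split; first exact Hal.
split; first exact Halg.
split.
  move=> s i k u v hs hi; rewrite -!set_nth_cat_add.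
  by apply: Hlin; rewrite ?size_cat; szlia.
split.
  move=> ds xs hds hxs; rewrite -(degsum_nseq G (size a)).
  by apply: Hdeg; [exact: homs_cat0 | rewrite size_cat; szlia].
split.
  move=> ds xs i hds hxs hi.
  rewrite swap_adjE -swapg_cat -swap_adjE.
  rewrite (Hskew (nseq (size a) 0 ++ ds) (a ++ xs) (size a + i)).
  - by rewrite -[(size a + i).+1]addnS !nth_cat_add ?size_nseq.
  - exact: homs_cat0.
  - by rewrite size_cat; szlia.
  - szlia.
move=> dx xs dy ys hx hy hxs hys.
have hx' := @homs_cat0 _ _ _ gr _ _ _ ha0 hx; have hy' := @homs_cat0 _ _ _ gr _ _ _ ha0 hy.
have := Hnam _ _ _ _ hx' hy'.
rewrite !size_cat map_cat mapa -catA /= => ->; try szlia.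
have En : n = (size a + (n - size a))%N by szlia.
rewrite [in X in X = _]En big_split_ord /= big1 ?add0r; last first.
  move=> [i hi] _ /=.
  have inner : br (rcons (a ++ xs) (nth 0 (a ++ ys) i)) = 0.
    rewrite nth_cat hi.
    have e : (i + (size a + size xs - i - 1).+1 = size (a ++ xs))%N.
      by rewrite size_cat; szlia.
    have hsd : size (nseq (size a) (0 : G) ++ dx) = size (a ++ xs).
      by rewrite !size_cat size_nseq hx.1.
    apply: (Hdup (size a + size xs - i - 1)%N (rcons (a ++ xs) (nth 0 a i)) (rcons (nseq (size a) (0 : G) ++ dx) 0) i); rewrite ?e.
    - by apply: homs_rcons => //; exact: ha0.
    - by rewrite size_rcons size_cat; szlia.
    - by rewrite size_cat; szlia.
    - rewrite [in RHS]nth_rcons ltnn eqxx nth_rcons ifT ?nth_cat ?hi // size_cat; szlia.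
    - rewrite nth_rcons ifT ?nth_cat ?size_nseq ?hi ?nth_nseq ?hi // size_cat size_nseq; szlia.
    - by rewrite nth_rcons !size_cat size_nseq hx.1 ltnn eqxx.
  rewrite inner.
  rewrite (Hzero _ (size [seq alpha i | i <- take i (a ++ ys)])) ?scaler0 //.
  - rewrite size_cat /= !size_map size_takel ?size_drop ?size_cat; szlia.
  - rewrite !size_map size_takel ?size_cat; szlia.
  - by rewrite nth_cat ltnn subnn.
apply: eq_bigr => [[i hi]] _ /=.
rewrite degsum_nseq take_cat_add ?size_nseq // degsum_nseq.
rewrite take_cat_add // -[(size a + i).+1]addnS drop_cat_add // nth_cat_add //.
by rewrite map_cat mapa rcons_cat -catA.
Qed.
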